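(* Let $\mathbb{K}$ be a field of characteristic $0$, let $F(n)$ be a holonomic sequence of order $J>0$, and let $L=\sum_{i=0}^{J}a_i(n)\sigma^i\in\operatorname{ann}F(n)$ with $a_0(n)a_J(n)\neq0$. Let $a(n),b(n)\in\mathbb{K}[n]$ be such that $\frac{a(n)}{b(n)}F(n)$ is summable. Suppose that for every $h\in\mathbb{N}=\{0,1,2,\dots\}$, \[\gcd(a_0(n),a_J(n+h))=\gcd(b(n),b(n+J+h))=1\] and \[\gcd(a_0(n),b(n+J+h))=\gcd(b(n),a_J(n+h))=1.\] Then $b(n)\mid a(n)$.
   Context: $\sigma$ is the shift operator, $L(F(n))=\sum_i a_i(n)F(n+i)$, $\operatorname{ann}F(n)=\{L\in\mathbb{K}[n][\sigma]:L(F(n))=0\}$, $F$ holonomic means $\operatorname{ann}F\neq\{0\}$, and the order of $F$ is the minimal order of a nonzero element of $\operatorname{ann}F$. A holonomic sequence $G(n)$ of order $J$ is summable if $G(n)=\Delta\big(\sum_{i=0}^{J-1}u_i(n)G(n+i)\big)$ for some rational functions $u_i(n)\in\mathbb{K}(n)$, where $\Delta=\sigma-1$. *)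

(* Defs.v *)
From HB Require Import structures.
From mathcomp Require Import all_boot all_order all_algebra.
Set Implicit Arguments. Unset Strict Implicit. Unset Printing Implicit Defensive.
Import Order.TTheory GRing.Theory Num.Theory.
Local Open Scope ring_scope.

(* Sequences are functions nat -> K; identities between sequences are
   understood eventually (for all sufficiently large n), which is how
   identities involving rational-function coefficients (with finitely many
   poles) are meaningful. *)
Definition eventually (P : nat -> Prop) : Prop := exists N : nat, forall n, (N <= n)%N -> P n.

Definition peval {K : fieldType} (p : {poly K}) (n : nat) : K := p.[n%:R].

Definition pshift {K : fieldType} (p : {poly K}) (h : nat) : {poly K} :=
  p \Po ('X + (h%:R)%:P).

Definition apply_op {K : fieldType} (J : nat) (a : 'I_J.+1 -> {poly K})
  (F : nat -> K) (n : nat) : K :=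
  \sum_(i < J.+1) peval (a i) n * F (n + i)%N.

Definition in_ann {K : fieldType} (J : nat) (a : 'I_J.+1 -> {poly K})
  (F : nat -> K) : Prop :=
  eventually (fun n => apply_op a F n = 0).

Definition has_ann_of_order {K : fieldType} (F : nat -> K) (k : nat) : Prop :=
  exists a : 'I_k.+1 -> {poly K}, a ord_max != 0 /\ in_ann a F.

Definition holonomic_of_order {K : fieldType} (F : nat -> K) (J : nat) : Prop :=
  has_ann_of_order F J /\ (forall k, (k < J)%N -> ~ has_ann_of_order F k).

(* G holonomic of order J is summable: G = Delta(sum_{i<J} u_i(n) G(n+i)) with
   rational u_i; the u_i are written over a common denominator q <> 0,
   u_i = p_i / q. *)
Definition summable {K : fieldType} (G : nat -> K) : Prop :=
  exists J : nat, holonomic_of_order G J /\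
  exists (p : 'I_J -> {poly K}) (q : {poly K}), q != 0 /\
    let H := fun m => \sum_(i < J) (peval (p i) m / peval q m) * G (m + i)%N in
    eventually (fun n => G n = H n.+1 - H n).

(* Main.v *)
Require Import Defs.
From HB Require Import structures.
From mathcomp Require Import all_boot all_order all_algebra.
From Stdlib Require Import Classical.
From mathcomp Require Import ring.
Set Implicit Arguments. Unset Strict Implicit. Unset Printing Implicit Defensive.
Import Order.TTheory GRing.Theory Num.Theory.
Local Open Scope ring_scope.

Definition sh {K : fieldType} (p : {poly K}) (c : K) : {poly K} := p \Po ('X + c%:P).

Lemma pshiftE (K : fieldType) (p : {poly K}) h : pshift p h = sh p h%:R.
Proof. by []. Qed.

Lemma hornerXaddC (K : fieldType) (c x : K) : ('X + c%:P).[x] = x + c.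
Proof. by rewrite hornerD hornerX hornerC. Qed.

Lemma horner_sh (K : fieldType) (p : {poly K}) c x : (sh p c).[x] = p.[x + c].
Proof. by rewrite /sh horner_comp hornerXaddC. Qed.

Lemma size_sh (K : fieldType) (p : {poly K}) c : size (sh p c) = size p.
Proof. by rewrite /sh size_comp_poly2 // size_XaddC. Qed.

Lemma sh_eq0 (K : fieldType) (p : {poly K}) c : (sh p c == 0) = (p == 0).
Proof. by rewrite -!size_poly_eq0 size_sh. Qed.

Lemma shM (K : fieldType) (p q : {poly K}) c : sh (p * q) c = sh p c * sh q c.
Proof. by rewrite /sh comp_polyM. Qed.

Lemma sh_sh (K : fieldType) (p : {poly K}) a b : sh (sh p a) b = sh p (a + b).
Proof.
rewrite /sh -comp_polyA comp_polyD comp_polyX comp_polyC.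
by rewrite -addrA -polyCD (addrC b).
Qed.

Lemma sh0 (K : fieldType) (p : {poly K}) : sh p 0 = p.
Proof. by rewrite /sh addr0 comp_polyXr. Qed.

Lemma shK (K : fieldType) (p : {poly K}) c : sh (sh p c) (- c) = p.
Proof. by rewrite sh_sh subrr sh0. Qed.

Lemma shK' (K : fieldType) (p : {poly K}) c : sh (sh p (- c)) c = p.
Proof. by rewrite sh_sh addNr sh0. Qed.

Lemma dvdp_sh (K : fieldType) (p q : {poly K}) c : (sh p c %| sh q c) = (p %| q).
Proof.
apply/idP/idP.
  case/dvdpP => r Hr; apply/dvdpP; exists (sh r (-c)).
  by rewrite -(shK q c) Hr shM shK.
case/dvdpP => r ->; apply/dvdpP; exists (sh r c); by rewrite shM.
Qed.

Lemma eqp1_size (K : fieldType) (p : {poly K}) : (p %= 1) = (size p == 1%N).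
Proof. by rewrite size_poly_eq1. Qed.

Lemma coprimep_sh (K : fieldType) (p q : {poly K}) c :
  coprimep p q -> coprimep (sh p c) (sh q c).
Proof.
move/coprimepP => H; apply/coprimepP => d dp dq.
rewrite -(shK' d c) in dp dq.
rewrite dvdp_sh in dp; rewrite dvdp_sh in dq.
have := H _ dp dq. by rewrite !eqp1_size size_sh.
Qed.

Lemma irred_sh (K : fieldType) (f : {poly K}) c :
  irreducible_poly f -> irreducible_poly (sh f c).
Proof.
case=> Hs Hi; split; first by rewrite size_sh.
move=> q q1 qd.
have : sh q (-c) %| f by rewrite -(dvdp_sh _ _ c) shK'.
move/(Hi _); rewrite size_sh => /(_ q1) /andP [h1 h2].
apply/andP; split.
  by rewrite -(dvdp_sh _ _ (-c)) shK.
by rewrite -(dvdp_sh _ _ (-c)) shK.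
Qed.

Lemma natr_inj0 (K : fieldType) (Kchar0 : [pchar K] =i pred0) (m n : nat) :
  (m%:R == n%:R :> K) = (m == n).
Proof.
have H := (pcharf0P K).1 Kchar0.
wlog le : m n / (m <= n)%N.
  move=> W; case: (leqP m n) => h; first exact: W.
  by rewrite eq_sym W ?(ltnW h) // eq_sym.
rewrite -(subnK le) natrD -{1}(add0r (m%:R)) (inj_eq (addIr _)) eq_sym H.
by rewrite -{2}(add0n m) eqn_add2r eq_sym.
Qed.

Lemma peval_pshift (K : fieldType) (p : {poly K}) k n :
  peval (pshift p k) n = peval p (n + k).
Proof. by rewrite /peval pshiftE horner_sh natrD. Qed.

Lemma ev_and (P Q : nat -> Prop) : eventually P -> eventually Q -> eventually (fun n => P n /\ Q n).
Proof.
case=> N1 H1 [N2 H2]; exists (maxn N1 N2) => n hn; split.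
  by apply: H1; rewrite (leq_trans (leq_maxl _ _) hn).
by apply: H2; rewrite (leq_trans (leq_maxr _ _) hn).
Qed.

Lemma ev_mono (P Q : nat -> Prop) : (forall n, P n -> Q n) -> eventually P -> eventually Q.
Proof. by move=> H [N HN]; exists N => n /HN /H. Qed.

Lemma ev_shift (P : nat -> Prop) k : eventually P -> eventually (fun n => P (n + k)%N).
Proof. by case=> N H; exists N => n hn; apply: H; rewrite (leq_trans hn) ?leq_addr. Qed.

Lemma ev_forall (m : nat) (P : nat -> nat -> Prop) :
  (forall i, (i < m)%N -> eventually (P i)) -> eventually (fun n => forall i, (i < m)%N -> P i n).
Proof.
elim: m => [|m IH] H; first by exists 0%N.
have := ev_and (IH (fun i hi => H i (ltnW hi))) (H m (ltnSn m)).
apply: ev_mono => n [h1 h2] i; rewrite ltnS leq_eqVlt => /orP [/eqP -> //|]; exact: h1.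
Qed.

Lemma ev_true : eventually (fun _ => True).
Proof. by exists 0%N. Qed.

Lemma ev_nz (K : fieldType) (Kchar0 : [pchar K] =i pred0) (Q : {poly K}) :
  Q != 0 -> eventually (fun n => peval Q n != 0).
Proof.
move: {2}(size Q) (leqnn (size Q)) => s; elim: s Q => [|s IH] Q hs hQ.
  by move: hQ; rewrite -size_poly_eq0; move: hs; rewrite leqn0 => ->.
case: (classic (exists n0 : nat, root Q n0%:R)) => [[n0 hn0]|hno]; last first.
  exists 0%N => n _; apply/negP => /eqP h; apply: hno; exists n; exact/eqP.
case/factor_theorem: hn0 => Q' eQ.
have Q'0 : Q' != 0 by apply: contraNneq hQ => e; rewrite eQ e mul0r.
have : (size Q' <= s)%N.
  move: hs; rewrite eQ size_Mmonic ?monicXsubC // ?size_XsubC ?addn2 //.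
case/(IH _)/(_ Q'0) => N HN; exists (maxn N n0.+1) => n hn.
rewrite /peval eQ hornerM mulf_neq0 //; first by apply: HN; rewrite (leq_trans (leq_maxl _ _) hn).
rewrite hornerXsubC subr_eq0 natr_inj0 //.
by apply: contraTneq (leq_trans (leq_maxr _ _) hn) => ->; rewrite ltnn.
Qed.

Lemma ev_zero_poly (K : fieldType) (Kchar0 : [pchar K] =i pred0) (P : {poly K}) :
  eventually (fun n => peval P n = 0) -> P = 0.
Proof.
move=> H; case: (eqVneq P 0) => // /(ev_nz Kchar0) H2.
by case: (ev_and H H2) => N HN; case: (HN N (leqnn N)) => -> /eqP.
Qed.

Definition israt (K : fieldType) (f : nat -> K) :=
  exists P Q : {poly K}, Q != 0 /\ eventually (fun n => f n = peval P n / peval Q n).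

Lemma israt_poly (K : fieldType) (P : {poly K}) : israt (peval P).
Proof. exists P, 1; split; first exact: oner_neq0. by exists 0%N => n _; rewrite /peval hornerC divr1. Qed.

Lemma israt_ext (K : fieldType) (f g : nat -> K) :
  israt f -> eventually (fun n => f n = g n) -> israt g.
Proof.
case=> P [Q [hQ H]] H2; exists P, Q; split => //.
by apply: ev_mono (ev_and H H2) => n [<- <-].
Qed.

Lemma israt_mul (K : fieldType) (f g : nat -> K) :
  israt f -> israt g -> israt (fun n => f n * g n).
Proof.
case=> P1 [Q1 [h1 H1]] [P2 [Q2 [h2 H2]]]; exists (P1 * P2), (Q1 * Q2); split.
  by rewrite mulf_neq0.
apply: ev_mono (ev_and H1 H2) => n [-> ->].
by rewrite /peval !hornerM invfM; rewrite mulrACA.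
Qed.

Lemma israt_inv (K : fieldType) (f : nat -> K) :
  israt f -> israt (fun n => (f n)^-1).
Proof.
case=> P [Q [h H]]; case: (eqVneq P 0) => [eP|hP].
  exists 0, 1; split; first exact: oner_neq0.
  by apply: ev_mono H => n ->; rewrite eP /peval !horner0 mul0r invr0 mul0r.
exists Q, P; split => //; apply: ev_mono H => n ->.
by rewrite invfM invrK mulrC.
Qed.

Lemma israt_add (K : fieldType) (Kchar0 : [pchar K] =i pred0) (f g : nat -> K) :
  israt f -> israt g -> israt (fun n => f n + g n).
Proof.
case=> P1 [Q1 [h1 H1]] [P2 [Q2 [h2 H2]]]; exists (P1 * Q2 + P2 * Q1), (Q1 * Q2); split.
  by rewrite mulf_neq0.
apply: ev_mono (ev_and (ev_and H1 H2) (ev_and (ev_nz Kchar0 h1) (ev_nz Kchar0 h2))).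
move=> n [[-> ->] [n1 n2]].
rewrite /peval !(hornerM, hornerD). rewrite /peval in n1 n2. by field; rewrite n1 n2.
Qed.

Lemma israt_const (K : fieldType) (c : K) : israt (fun _ => c).
Proof. apply: israt_ext (israt_poly c%:P) _; exists 0%N => n _; by rewrite /peval hornerC. Qed.

Lemma israt_opp (K : fieldType) (f : nat -> K) : israt f -> israt (fun n => - f n).
Proof.
move=> h; apply: israt_ext (israt_mul (israt_const (-1)) h) _.
by exists 0%N => n _; rewrite mulN1r.
Qed.

Lemma israt_div (K : fieldType) (f g : nat -> K) :
  israt f -> israt g -> israt (fun n => f n / g n).
Proof. by move=> hf hg; apply: israt_mul hf (israt_inv hg). Qed.

Lemma israt_shift (K : fieldType) (f : nat -> K) k :
  israt f -> israt (fun n => f (n + k)%N).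
Proof.
case=> P [Q [h H]]; exists (pshift P k), (pshift Q k); split.
  by rewrite pshiftE sh_eq0.
by apply: ev_mono (ev_shift k H) => n ->; rewrite !peval_pshift.
Qed.

Lemma israt_sum (K : fieldType) (Kchar0 : [pchar K] =i pred0) (m : nat) (f : nat -> nat -> K) :
  (forall i, (i < m)%N -> israt (f i)) -> israt (fun n => \sum_(i < m) f i n).
Proof.
elim: m => [|m IH] H.
  by apply: israt_ext (israt_const 0) _; exists 0%N => n _; rewrite big_ord0.
apply: israt_ext (israt_add Kchar0 (IH (fun i hi => H i (ltnW hi))) (H m (ltnSn m))) _.
by exists 0%N => n _; rewrite big_ord_recr.
Qed.

Lemma comden (K : fieldType) (Kchar0 : [pchar K] =i pred0) (m : nat) (c : nat -> nat -> K) :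
  (forall i, (i < m)%N -> israt (c i)) ->
  exists Q : {poly K}, Q != 0 /\ exists P : nat -> {poly K},
    eventually (fun n => peval Q n != 0 /\ forall i, (i < m)%N -> c i n = peval (P i) n / peval Q n).
Proof.
elim: m => [|m IH] H.
  exists 1; split; first exact: oner_neq0. exists (fun _ => 0).
  by exists 0%N => n _; split => //; rewrite /peval hornerC oner_neq0.
case: (IH (fun i hi => H i (ltnW hi))) => Q [hQ [P HP]].
case: (H m (ltnSn m)) => P' [Q' [hQ' HP']].
exists (Q * Q'); split; first by rewrite mulf_neq0.
exists (fun i => if (i < m)%N then P i * Q' else P' * Q).
apply: ev_mono (ev_and (ev_and HP HP') (ev_nz Kchar0 hQ')) => n [[[n1 H1] H2] n2].
split; first by rewrite /peval hornerM mulf_neq0.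
move=> i; rewrite ltnS leq_eqVlt => /orP [/eqP ->|hi].
  rewrite ltnn H2 /peval !hornerM. rewrite /peval in n1 n2. by field; rewrite n1 n2.
rewrite hi H1 // /peval !hornerM. rewrite /peval in n1 n2. by field; rewrite n1 n2.
Qed.

Lemma polyrel_zero (K : fieldType) (F : nat -> K) (J : nat) (hF : holonomic_of_order F J) :
  forall m, (m <= J)%N -> forall P : nat -> {poly K},
  eventually (fun n => \sum_(i < m) peval (P i) n * F (n + i)%N = 0) ->
  forall i, (i < m)%N -> P i = 0.
Proof.
elim=> [|m IH] hm P H i hi //.
case: (boolP (P m == 0)) => [/eqP Pm|Pm].
  move: hi; rewrite ltnS leq_eqVlt => /orP [/eqP e|hi]; first by rewrite e.
  apply: (IH (ltnW hm) P _ i hi).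
  by apply: ev_mono H => n; rewrite big_ord_recr /= Pm /peval horner0 mul0r addr0.
exfalso; apply: (hF.2 m hm).
exists (fun i : 'I_m.+1 => P i); split => //.
Qed.

Lemma min_rel (K : fieldType) (Kchar0 : [pchar K] =i pred0) (F : nat -> K) (J : nat)
  (hF : holonomic_of_order F J) (m : nat) (hm : (m <= J)%N) (c : nat -> nat -> K) :
  (forall i, (i < m)%N -> israt (c i)) ->
  eventually (fun n => \sum_(i < m) c i n * F (n + i)%N = 0) ->
  eventually (fun n => forall i, (i < m)%N -> c i n = 0).
Proof.
move=> hc H.
case: (comden Kchar0 hc) => Q [hQ [P HP]].
have Pz := @polyrel_zero K F J hF m hm P.
have E : eventually (fun n => \sum_(i < m) peval (P i) n * F (n + i)%N = 0).
  apply: ev_mono (ev_and H HP) => n [h [nQ hP]].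
  have : \sum_(i < m) c i n * F (n + i)%N = (peval Q n)^-1 * \sum_(i < m) peval (P i) n * F (n + i)%N.
    rewrite mulr_sumr; apply: eq_bigr => i _; rewrite hP //; ring.
  rewrite h => /esym /eqP; rewrite mulf_eq0 invr_eq0 (negbTE nQ) /= => /eqP //.
have Pz' := Pz E.
apply: ev_mono HP => n [nQ hP] i hi; by rewrite hP // Pz' // /peval horner0 mul0r.
Qed.

Lemma eqp_sh (K : fieldType) (p q : {poly K}) c : (sh p c %= sh q c) = (p %= q).
Proof. by rewrite /eqp !dvdp_sh. Qed.

Lemma lead_coef_sh (K : fieldType) (p : {poly K}) c : lead_coef (sh p c) = lead_coef p.
Proof. by rewrite /sh lead_coef_comp ?size_XaddC // lead_coefXaddC expr1n mulr1. Qed.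

Lemma sh_periodic (K : fieldType) (Kchar0 : [pchar K] =i pred0) (f : {poly K}) (c : K) :
  c != 0 -> sh f c = f -> (size f <= 1)%N.
Proof.
move=> c0 e.
have hv : forall n : nat, f.[c * n%:R] = f.[0].
  elim=> [|n IH]; first by rewrite mulr0.
  by rewrite -IH -[in RHS]e horner_sh mulrSr mulrDr mulr1.
pose h := (f - (f.[0])%:P) \Po (c *: 'X).
have hz : h = 0.
  apply: (ev_zero_poly Kchar0); exists 0%N => n _.
  by rewrite /peval /h horner_comp hornerZ hornerX hornerD hornerN hornerC hv subrr.
have : size (f - (f.[0])%:P) = 0%N.
  have s2 : size (c *: 'X : {poly K}) = 2%N by rewrite size_scale // size_polyX.
  by rewrite -(size_comp_poly2 _ s2) -/h hz size_poly0.
move/eqP; rewrite size_poly_eq0 subr_eq0 => /eqP ->; exact: size_polyC_leq1.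
Qed.

Lemma shift_coprime (K : fieldType) (Kchar0 : [pchar K] =i pred0) (f : {poly K}) (a b : K) :
  irreducible_poly f -> a != b -> coprimep (sh f a) (sh f b).
Proof.
move=> fi ab.
rewrite irreducible_poly_coprime; last exact: irred_sh.
apply/negP => hd.
have ee : sh f a %= sh f b.
  apply: (apply_irredp (irred_sh b fi)) => //.
  by rewrite size_sh; case: fi => s _; rewrite neq_ltn s orbT.
have : sh f (a - b) %= f by rewrite -(eqp_sh _ _ b) sh_sh subrK.
case/eqpP => [[c1 c2]] /= /andP [c10 c20] e.
have el : c1 = c2.
  have := congr1 lead_coef e; rewrite !lead_coefZ lead_coef_sh => /mulIf; apply.
  by rewrite lead_coef_eq0 irredp_neq0.
move: e; rewrite el => /(scalerI c20) e.
have := sh_periodic Kchar0 _ e; rewrite subr_eq0 => /(_ ab).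
by case: fi => s _; rewrite leqNgt s.
Qed.

Lemma shift_bound (K : fieldType) (Kchar0 : [pchar K] =i pred0) (f d : {poly K}) (c : K) :
  irreducible_poly f -> d != 0 -> c != 0 ->
  exists M : nat, forall u : nat, (M <= u)%N -> ~~ (sh f (u%:R * c) %| d).
Proof.
move=> fi; move: {2}(size d) (leqnn (size d)) => s; elim: s d => [|s IH] d hs d0 c0.
  by move: d0; rewrite -size_poly_eq0; move: hs; rewrite leqn0 => ->.
case: (classic (exists u0 : nat, sh f (u0%:R * c) %| d)) => [[u0 hu0]|hno]; last first.
  by exists 0%N => u _; apply/negP => h; apply: hno; exists u.
case/dvdpP: hu0 => g eg.
have g0 : g != 0 by apply: contraNneq d0 => e; rewrite eg e mul0r.
have sz : (size g <= s)%N.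
  have := size_mul g0 (irredp_neq0 (irred_sh (u0%:R * c) fi)).
  rewrite -eg size_sh => e.
  have : (size g < size d)%N.
    case: fi => sf _; move: sf e; case: (size f) => [|[|k]] // _ ->.
    by rewrite addnS /= addnS ltnS leq_addr.
  by move=> h; rewrite -ltnS (leq_trans h hs).
case: (IH g sz g0 c0) => M HM; exists (maxn M u0.+1) => u hu.
apply/negP; rewrite eg Gauss_dvdpl.
  by apply/negP; apply: HM; rewrite (leq_trans (leq_maxl _ _) hu).
apply: shift_coprime => //; rewrite -subr_eq0 -mulrBl mulf_eq0 negb_or c0 andbT.
rewrite subr_eq0 natr_inj0 //; apply: contraTneq (leq_trans (leq_maxr _ _) hu) => ->.
by rewrite ltnn.
Qed.

Lemma irred_factor (K : fieldType) (d : {poly K}) :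
  (1 < size d)%N -> exists f, irreducible_poly f /\ f %| d.
Proof.
move: {2}(size d) (leqnn (size d)) => s; elim: s d => [|s IH] d hs hd.
  by move: hd; rewrite ltnNge (leq_trans hs).
case: (classic (irreducible_poly d)) => [di|dn]; first by exists d; split.
have : exists q : {poly K}, [/\ size q != 1%N, q %| d & ~~ (q %= d)].
  apply: NNPP => hn; apply: dn; split => // q q1 qd; apply/negPn/negP => nq.
  by apply: hn; exists q.
case=> q [q1 qd nq].
have d0 : d != 0 by rewrite -size_poly_eq0; case: (size d) hd.
have q0 : q != 0 by apply: contraNneq d0 => e; move: qd; rewrite e dvd0p.
have qs : (size q < size d)%N.
  rewrite ltn_neqAle dvdp_leq // andbT; apply: contra nq => /eqP e.
  by rewrite -dvdp_size_eqp // e.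
case: (IH q _ _) => [||f [fi fq]].
- by rewrite -ltnS (leq_trans qs hs).
- by rewrite ltn_neqAle eq_sym q1 /= lt0n size_poly_eq0.
by exists f; split => //; apply: dvdp_trans fq qd.
Qed.

Lemma irred_not_unit (K : fieldType) (p : {poly K}) : irreducible_poly p -> ~~ (p %= 1).
Proof. by case=> s _; rewrite -size_poly_eq1 neq_ltn s orbT. Qed.

Lemma irred_ndvd_mul (K : fieldType) (p x y : {poly K}) : irreducible_poly p ->
  ~~ (p %| x) -> ~~ (p %| y) -> ~~ (p %| x * y).
Proof.
move=> pi hx hy; rewrite Gauss_dvdpr //; by rewrite irreducible_poly_coprime.
Qed.

Lemma irred_ndvd_prod (K : fieldType) (p : {poly K}) (I : Type) (r : seq I) (P : pred I)
  (G : I -> {poly K}) : irreducible_poly p ->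
  (forall i, P i -> ~~ (p %| G i)) -> ~~ (p %| \prod_(i <- r | P i) G i).
Proof.
move=> pi H; apply: (big_ind (fun x => ~~ (p %| x))) => //.
  by rewrite dvdp1 size_poly_eq1 irred_not_unit.
move=> x y; exact: irred_ndvd_mul.
Qed.

Lemma dvdp_sumP (K : fieldType) (p : {poly K}) (I : Type) (r : seq I) (P : pred I)
  (G : I -> {poly K}) : (forall i, P i -> p %| G i) -> p %| \sum_(i <- r | P i) G i.
Proof.
move=> H; apply: (big_ind (fun x => p %| x)); [exact: dvdp0| |exact: H].
move=> x y; exact: dvdp_add.
Qed.

Definition Ident (K : fieldType) (J : nat) (an : nat -> {poly K}) (A B e d : {poly K}) :=
  forall t : nat,
  pshift A (J + t) * \prod_(k < J.+1) pshift d (k + t) =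
  - (pshift B (J + t) * \sum_(k < J.+1) pshift (an (J - k)%N) (k + t) * pshift e (k + t) *
       \prod_(j < J.+1 | j != k) pshift d (j + t)).

Lemma key_div (K : fieldType) (J : nat) (an : nat -> {poly K}) (A B e d : {poly K})
  (hI : Ident J an A B e d) (ced : coprimep e d) (p : {poly K}) (pi : irreducible_poly p)
  (k0 : 'I_J.+1) (t : nat) :
  p %| pshift d (k0 + t) -> (forall j : 'I_J.+1, j != k0 -> ~~ (p %| pshift d (j + t))) ->
  p %| pshift B (J + t) \/ p %| pshift (an (J - k0)%N) (k0 + t).
Proof.
move=> hp hn.
have hL : p %| pshift A (J + t) * \prod_(k < J.+1) pshift d (k + t).
  by apply: dvdp_mull; rewrite (bigD1 k0) //=; apply: dvdp_mulr.
move: hL; rewrite hI dvdpNr (bigD1 k0) //= mulrDr dvdp_addl; last first.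
  apply: dvdp_mull; apply: dvdp_sumP => k hk.
  by apply: dvdp_mull; rewrite (bigD1 k0) /=; [apply: dvdp_mulr | rewrite eq_sym].
case: (boolP (p %| pshift B (J + t))) => hB; first by left.
rewrite Gauss_dvdpr ?irreducible_poly_coprime // Gauss_dvdpl; last first.
  by rewrite irreducible_poly_coprime //; apply: irred_ndvd_prod.
have ce : coprimep (pshift e (k0 + t)) (pshift d (k0 + t)) by rewrite !pshiftE coprimep_sh.
rewrite Gauss_dvdpl; first by right.
rewrite irreducible_poly_coprime //; apply/negP => he.
by move/coprimepP: ce => /(_ p he hp); apply/negP; apply: irred_not_unit.
Qed.

Lemma pshift_pshift (K : fieldType) (p : {poly K}) a b : pshift (pshift p a) b = pshift p (a + b).
Proof. by rewrite !pshiftE sh_sh natrD. Qed.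

Lemma pshift0 (K : fieldType) (p : {poly K}) : pshift p 0 = p.
Proof. by rewrite pshiftE sh0. Qed.

Lemma dvdp_pshift (K : fieldType) (p q : {poly K}) k : (pshift p k %| pshift q k) = (p %| q).
Proof. by rewrite !pshiftE dvdp_sh. Qed.

Lemma pshiftC (K : fieldType) (c : K) k : pshift c%:P k = c%:P.
Proof. by rewrite /pshift comp_polyC. Qed.

Lemma final_contra (K : fieldType) (p X Y : {poly K}) k :
  irreducible_poly p -> coprimep X Y -> p %| pshift X k -> p %| pshift Y k -> False.
Proof.
move=> pi cXY hX hY.
have := coprimep_sh (k%:R) cXY; move/coprimepP => /(_ p hX hY).
by apply/negP; apply: irred_not_unit.
Qed.

Lemma disp_main (K : fieldType) (Kchar0 : [pchar K] =i pred0) (J : nat)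
  (an : nat -> {poly K}) (A B e d : {poly K})
  (hI : Ident J an A B e d) (ced : coprimep e d) (d0 : d != 0)
  (h1 : forall h : nat, coprimep (an 0%N) (pshift (an J) h))
  (h2 : forall h : nat, coprimep B (pshift B (J + h)))
  (h3 : forall h : nat, coprimep (an 0%N) (pshift B (J + h)))
  (h4 : forall h : nat, coprimep B (pshift (an J) h)) :
  B %| A.
Proof.
case: (leqP (size d) 1) => sd.
  have ed := size1_polyC sd; set c := d`_0 in ed.
  have c0 : c != 0 by apply: contraNneq d0 => e0; rewrite ed e0.
  have := hI 0%N.
  have -> : \prod_(k < J.+1) pshift d (k + 0) = (c ^+ J.+1)%:P.
    rewrite ed; under eq_bigr do rewrite pshiftC.
    by rewrite prodr_const card_ord rmorphXn.
  move=> e1.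
  have : pshift B (J + 0) %| pshift A (J + 0) * (c ^+ J.+1)%:P.
    by rewrite e1 dvdpNr dvdp_mulIl.
  move/(dvdp_mulr ((c ^+ J.+1)^-1)%:P); rewrite -mulrA -polyCM divff ?expf_neq0 // mulr1.
  by rewrite dvdp_pshift.
case: (irred_factor sd) => f [fi fd].
have n1 : (-1 : K) != 0 by rewrite oppr_eq0 oner_neq0.
have [M1 HM1] := shift_bound Kchar0 fi d0 n1.
have ub1 : forall j, f %| pshift d j -> (j <= M1)%N.
  move=> j hj; rewrite leqNgt; apply/negP => hjM.
  have := HM1 j (ltnW hjM); rewrite mulrN1.
  by rewrite -(dvdp_sh _ _ (j%:R)) shK'; rewrite pshiftE in hj; rewrite hj.
have exP1 : exists j, (fun j => f %| pshift d j) j by exists 0%N; rewrite /= pshift0.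
case: (ex_maxnP exP1 ub1) => j0 hj0 maxj0.
have hmin := key_div hI ced fi (k0 := ord0) (t := j0).
have {}hmin : f %| pshift B (J + j0) \/ f %| pshift (an J) j0.
  rewrite subn0 add0n in hmin; apply: hmin => // j hj.
  apply/negP => /maxj0; rewrite -{2}(add0n j0) leq_add2r leqn0 => /eqP ej.
  by move: hj; apply/negP; rewrite negbK; apply/eqP/val_inj.
have pd0 : pshift d j0 != 0 by rewrite pshiftE sh_eq0.
have [M2 HM2] := shift_bound Kchar0 fi pd0 (oner_neq0 K).
have ub2 : forall u, pshift f u %| pshift d j0 -> (u <= M2)%N.
  move=> u hu; rewrite leqNgt; apply/negP => huM.
  by have := HM2 u (ltnW huM); rewrite mulr1 -pshiftE hu.
have exP2 : exists u, (fun u => pshift f u %| pshift d j0) u by exists 0%N; rewrite /= pshift0.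
case: (ex_maxnP exP2 ub2) => u0 hu0 maxu0.
have pi : irreducible_poly (pshift f (u0 + J)) by rewrite pshiftE; apply: irred_sh.
have hmax := key_div hI ced pi (k0 := ord_max) (t := j0).
have {}hmax : pshift f (u0 + J) %| pshift B (J + j0) \/
                   pshift f (u0 + J) %| pshift (an 0%N) (J + j0).
  rewrite subnn in hmax; apply: hmax.
    by rewrite /= -pshift_pshift (addnC J) -(pshift_pshift d) dvdp_pshift.
  move=> j hj; apply/negP.
  have jJ : (j < J)%N by rewrite ltn_neqAle -ltnS ltn_ord andbT; apply: contra hj => /eqP ej2; apply/eqP/val_inj.
  have -> : (u0 + J = (u0 + (J - j)) + j)%N by rewrite -addnA subnK // ltnW.
  rewrite (addnC j) -(pshift_pshift f (u0 + (J - j)) j) -(pshift_pshift d j0 j) dvdp_pshift => /maxu0.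
  by rewrite -{2}(addn0 u0) leq_add2l leqn0 subn_eq0 leqNgt jJ.
have Pu : forall X, pshift f (u0 + J) %| pshift X (J + j0) -> pshift f u0 %| pshift X j0.
  by move=> X; rewrite (addnC J) -!pshift_pshift dvdp_pshift.
have fu0 : irreducible_poly (pshift f u0) by rewrite pshiftE; apply: irred_sh.
have Qu : forall X k, f %| pshift X k -> pshift f u0 %| pshift (pshift X u0) k.
  by move=> X k; rewrite pshift_pshift addnC -pshift_pshift dvdp_pshift.
exfalso; case: hmax => /Pu hx; case: hmin => /Qu hy.
- apply: (final_contra fu0 (h2 u0) hx).
  by rewrite pshift_pshift in hy; rewrite pshift_pshift (addnC J u0) -addnA.
- exact: (final_contra fu0 (h4 u0) hx hy).
- apply: (final_contra fu0 (h3 u0) hx).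
  by rewrite pshift_pshift in hy; rewrite pshift_pshift (addnC J u0) -addnA.
- exact: (final_contra fu0 (h1 u0) hx hy).
Qed.

Lemma ev_nz_shift (K : fieldType) (Kchar0 : [pchar K] =i pred0) (Q : {poly K}) (m : nat) :
  Q != 0 -> eventually (fun n => forall i, (i < m)%N -> peval Q (n + i)%N != 0).
Proof.
move=> hQ; apply: ev_forall => i _; exact: ev_shift (ev_nz Kchar0 hQ).
Qed.

Lemma order_le (K : fieldType) (Kchar0 : [pchar K] =i pred0) (F : nat -> K) (J : nat)
  (an : nat -> {poly K}) (aJ0 : an J != 0)
  (hL : eventually (fun n => \sum_(i < J.+1) peval (an i) n * F (n + i)%N = 0))
  (A B : {poly K}) (A0 : A != 0) (B0 : B != 0) (J' : nat)
  (hG : holonomic_of_order (fun n => peval A n / peval B n * F n) J') : (J' <= J)%N.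
Proof.
rewrite leqNgt; apply/negP => hJ; apply: (hG.2 J hJ).
pose c i n := peval (an i) n * (peval B (n + i)%N / peval A (n + i)%N).
have hc : forall i, (i < J.+1)%N -> israt (c i).
  move=> i _; apply: israt_mul; first exact: israt_poly.
  by apply: israt_div; apply: israt_shift; apply: israt_poly.
case: (comden Kchar0 hc) => Q [hQ [P HP]].
have E := ev_and (ev_and HP hL) (ev_and (ev_nz_shift Kchar0 J.+1 A0) (ev_nz_shift Kchar0 J.+1 B0)).
exists (fun i : 'I_J.+1 => P i); split; last first.
  apply: ev_mono E => n [[[nQ hP] hl] [hA hB]].
  rewrite /apply_op.
  have : \sum_(i < J.+1) peval (P i) n * (peval A (n + i)%N / peval B (n + i)%N * F (n + i)%N)
       = peval Q n * \sum_(i < J.+1) peval (an i) n * F (n + i)%N.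
    rewrite mulr_sumr; apply: eq_bigr => i _.
    have := hP i (ltn_ord i); rewrite /c => e.
    have -> : peval (P i) n = peval Q n * (peval (an i) n * (peval B (n + i)%N / peval A (n + i)%N)).
      by rewrite e; field.
    have a0 := hA i (ltn_ord i); have b0 := hB i (ltn_ord i).
    move: a0 b0; set x := peval A _; set y := peval B _; move=> a0 b0; by field; rewrite a0 b0.
  by rewrite hl mulr0.
apply/negP => /eqP P0.
have E2 := ev_and (ev_and HP (ev_nz Kchar0 aJ0)) (ev_and (ev_nz_shift Kchar0 J.+1 A0) (ev_nz_shift Kchar0 J.+1 B0)).
case: E2 => N HN; case: (HN N (leqnn N)) => [[[nQ hP] naJ] [hA hB]].
have := hP J (ltnSn J); rewrite /= P0 /peval horner0 mul0r /c.
move/eqP; rewrite !mulf_eq0 invr_eq0.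
rewrite (negbTE naJ) (negbTE (hA J (ltnSn J))) (negbTE (hB J (ltnSn J))) //.
Qed.

Lemma sum_recl_nat (K : fieldType) (m : nat) (f : nat -> K) :
  \sum_(j < m.+1) f (j : nat) = f 0%N + \sum_(j < m) f (j.+1).
Proof. by rewrite big_ord_recl. Qed.

Lemma sum_recr_nat (K : fieldType) (m : nat) (f : nat -> K) :
  \sum_(j < m.+1) f (j : nat) = \sum_(j < m) f (j : nat) + f m.
Proof. by rewrite big_ord_recr. Qed.

Lemma subr0_eq' (K : fieldType) (x y : K) : x - y = 0 -> x = y.
Proof. by move/eqP; rewrite subr_eq0 => /eqP. Qed.

Lemma front (K : fieldType) (Kchar0 : [pchar K] =i pred0) (F : nat -> K) (J1 : nat)
  (hF : holonomic_of_order F J1.+1) (an : nat -> {poly K}) (aJ0 : an J1.+1 != 0)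
  (hL : eventually (fun n => \sum_(i < J1.+2) peval (an i) n * F (n + i)%N = 0))
  (A B : {poly K}) (A0 : A != 0) (B0 : B != 0)
  (hsum : summable (fun n => peval A n / peval B n * F n)) :
  exists s : nat -> K, israt s /\ eventually (fun n =>
    - (peval A (n + J1.+1)%N / peval B (n + J1.+1)%N) =
    \sum_(k < J1.+2) s (n + k)%N * peval (an (J1.+1 - k)%N) (n + k)%N).
Proof.
case: hsum => J' [hG [p [q [q0 HS]]]].
have hJ' := order_le Kchar0 aJ0 hL A0 B0 hG.
pose r n := peval A n / peval B n.
pose pn (i : nat) : {poly K} := oapp p 0 (insub i : option 'I_J').
pose w i m := peval (pn i) m / peval q m * r (m + i)%N.
pose W m := \sum_(i < J1.+1) w (i : nat) m * F (m + i)%N.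
have HH : forall m, \sum_(i < J') (peval (p i) m / peval q m) * (peval A (m + i)%N / peval B (m + i)%N * F (m + i)%N) = W m.
  move=> m; transitivity (\sum_(i < J') w (i : nat) m * F (m + i)%N).
    by apply: eq_bigr => i _; rewrite /w /pn valK /= /r mulrA.
  rewrite (big_ord_widen _ (fun i => w i m * F (m + i)%N) hJ') big_mkcond; apply: eq_bigr => i _.
  case: ifP => // hi; rewrite /w /pn insubN ?hi //= /peval horner0 !mul0r //.
have HS' : eventually (fun n => r n * F n = W n.+1 - W n).
  by apply: ev_mono HS => n /=; rewrite !HH.
pose s n := w J1 n.+1 / peval (an J1.+1) n.
pose c i n := (if i == 0%N then r n else - w i.-1 n.+1) + w i n + s n * peval (an i) n.
have R : eventually (fun n => \sum_(i < J1.+1) c (i : nat) n * F (n + i)%N = 0).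
  apply: ev_mono (ev_and (ev_and HS' hL) (ev_nz Kchar0 aJ0)) => n [[hs hl] naJ].
  have e1 : \sum_(i < J1.+1) c (i : nat) n * F (n + i)%N =
     \sum_(i < J1.+1) (if (i : nat) == 0%N then r n else - w (i : nat).-1 n.+1) * F (n + i)%N
     + W n + s n * \sum_(i < J1.+1) peval (an i) n * F (n + i)%N.
    rewrite mulr_sumr -!big_split /=; apply: eq_bigr => i _; by rewrite /c !mulrDl -mulrA.
  have e2 : \sum_(i < J1.+1) (if (i : nat) == 0%N then r n else - w (i : nat).-1 n.+1) * F (n + i)%N
      = r n * F n - \sum_(i < J1) w (i : nat) n.+1 * F (n.+1 + i)%N.
    rewrite (sum_recl_nat _ (fun i => (if i == 0%N then r n else - w i.-1 n.+1) * F (n + i)%N)) /=.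
    rewrite addn0 -sumrN; congr (_ + _); apply: eq_bigr => i _; by rewrite -addSnnS mulNr.
  have e3 : \sum_(i < J1.+1) peval (an i) n * F (n + i)%N = - (peval (an J1.+1) n * F (n + J1.+1)%N).
    move: hl; rewrite (sum_recr_nat _ (fun i => peval (an i) n * F (n + i)%N)) => /eqP.
    by rewrite addr_eq0 => /eqP.
  have e4 : W n.+1 = \sum_(i < J1) w (i : nat) n.+1 * F (n.+1 + i)%N + w J1 n.+1 * F (n + J1.+1)%N.
    by rewrite /W (sum_recr_nat _ (fun i => w i n.+1 * F (n.+1 + i)%N)) addSnnS.
  have es : s n * peval (an J1.+1) n = w J1 n.+1 by rewrite /s divfK.
  rewrite e1 e2 e3 hs e4 mulrN mulrA es; ring.
have hr : israt r by apply: israt_div; apply: israt_poly.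
have hw : forall i, israt (w i).
  move=> i; apply: israt_mul; first by apply: israt_div; apply: israt_poly.
  exact: israt_shift.
have hw1 : forall i, israt (fun n => w i n.+1).
  move=> i; apply: israt_ext (israt_shift 1 (hw i)) _; by exists 0%N => n _; rewrite addn1.
have hs : israt s by apply: israt_div; [exact: hw1 | exact: israt_poly].
have hc : forall i, (i < J1.+1)%N -> israt (c i).
  move=> i _; rewrite /c; apply: israt_add => //; last by apply: israt_mul => //; exact: israt_poly.
  apply: israt_add => //; case: (i == 0%N) => //; exact: israt_opp.
have [N0 HZ] := min_rel Kchar0 hF (leqnn J1.+1) hc R.
have U : forall i, (i < J1.+1)%N -> forall n, (N0 <= n)%N ->
    w i n = - r (n + i)%N - \sum_(j < i.+1) s (n + j)%N * peval (an (i - j)%N) (n + j)%N.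
  elim=> [|i IH] hi n hn.
    have := HZ n hn 0%N hi; rewrite /c /= => e.
    rewrite (sum_recl_nat _ (fun j => s (n + j)%N * peval (an (0 - j)%N) (n + j)%N)) big_ord0 /=.
    rewrite !addn0 addr0; apply/subr0_eq'; rewrite -[RHS]e; ring.
  have := HZ n hn i.+1 hi; rewrite /c /= => e.
  rewrite (IH (ltnW hi) n.+1 (leqW hn)) in e.
  rewrite (sum_recl_nat _ (fun j => s (n + j)%N * peval (an (i.+1 - j)%N) (n + j)%N)) /=.
  under eq_bigr do rewrite subSS -addSnnS.
  rewrite !addn0 subn0 -addSnnS; apply/subr0_eq'; rewrite -[RHS]e; ring.
exists s; split => //.
have [N1 HN1] := ev_nz Kchar0 aJ0.
exists (maxn N0 N1) => n hn.
have hn0 : (N0 <= n)%N by rewrite (leq_trans (leq_maxl _ _) hn).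
have naJ := HN1 n (leq_trans (leq_maxr _ _) hn).
have es : w J1 n.+1 = s n * peval (an J1.+1) n by rewrite /s divfK.
have h := U J1 (ltnSn J1) n.+1 (leqW hn0).
rewrite (sum_recl_nat _ (fun k => s (n + k)%N * peval (an (J1.+1 - k)%N) (n + k)%N)) /=.
under eq_bigr do rewrite subSS -addSnnS.
rewrite addn0 subn0 -es h addSnnS /r; ring.
Qed.

Lemma idx3 (n k t : nat) : (n + (k + t) = n + t + k)%N.
Proof. by rewrite (addnC k) addnA. Qed.

Lemma horner_pshift (K : fieldType) (p : {poly K}) k n :
  (pshift p k).[n%:R] = peval p (n + k)%N.
Proof. exact: peval_pshift. Qed.

Lemma prod_ev (K : fieldType) (J : nat) (d : {poly K}) (n t : nat) (P : pred 'I_J.+1) :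
  peval (\prod_(j < J.+1 | P j) pshift d (j + t)) n = \prod_(j < J.+1 | P j) peval d (n + t + j)%N.
Proof. rewrite /peval horner_prod; apply: eq_bigr => j _; by rewrite horner_pshift idx3. Qed.

Lemma sum_ev (K : fieldType) (J : nat) (an : nat -> {poly K}) (e d : {poly K}) (n t : nat) :
  peval (\sum_(k < J.+1) pshift (an (J - k)%N) (k + t) * pshift e (k + t) *
       \prod_(j < J.+1 | j != k) pshift d (j + t)) n =
  \sum_(k < J.+1) peval (an (J - k)%N) (n + t + k)%N * peval e (n + t + k)%N *
       \prod_(j < J.+1 | j != k) peval d (n + t + j)%N.
Proof.
rewrite /peval horner_sum; apply: eq_bigr => k _.
rewrite !hornerM !horner_pshift !idx3; congr (_ * _).
exact: prod_ev.
Qed.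

Lemma adj_ident (K : fieldType) (Kchar0 : [pchar K] =i pred0) (J : nat) (an : nat -> {poly K})
  (A B : {poly K}) (B0 : B != 0) (s : nat -> K) (hs : israt s)
  (hadj : eventually (fun n => - (peval A (n + J)%N / peval B (n + J)%N) =
      \sum_(k < J.+1) s (n + k)%N * peval (an (J - k)%N) (n + k)%N)) :
  exists e d : {poly K}, d != 0 /\ coprimep e d /\ Ident J an A B e d.
Proof.
case: hs => P [Q [Q0 HPQ]].
pose g := gcdp P Q.
have eP : P = (P %/ g) * g by rewrite divpK // dvdp_gcdl.
have eQ : Q = (Q %/ g) * g by rewrite divpK // dvdp_gcdr.
set e := P %/ g in eP; set d := Q %/ g in eQ.
have d0 : d != 0 by apply: contraNneq Q0 => h; rewrite eQ h mul0r.
have ced : coprimep e d by apply: coprimep_div_gcd; rewrite Q0 orbT.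
have Hs : eventually (fun n => s n = peval e n / peval d n /\ peval d n != 0).
  apply: ev_mono (ev_and HPQ (ev_nz Kchar0 Q0)) => n [-> nQ].
  move: nQ; rewrite eP eQ /peval !hornerM mulf_eq0 negb_or => /andP [nd ng].
  by split => //; field; rewrite nd ng.
exists e, d; split => //; split => // t.
apply: subr0_eq; apply: (ev_zero_poly Kchar0).
have E := ev_and (ev_shift t hadj)
  (ev_and (ev_shift t (ev_forall (m := J.+1) (fun k _ => ev_shift k Hs)))
          (ev_shift (t + J) (ev_nz Kchar0 B0))).
apply: ev_mono E => n [ha [hk hB]].
rewrite addnA in hB.
rewrite /peval hornerD hornerN hornerN hornerM hornerM -!/(peval _ _) sum_ev prod_ev.
rewrite !peval_pshift (addnC J t) addnA.
set m := (n + t)%N in ha hk hB *.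
set D := \prod_(j < J.+1) peval d (m + j)%N.
have hD : D != 0 by rewrite /D prodf_seq_neq0; apply/allP => j _; apply: (hk j _).2.
have -> : \sum_(k < J.+1) peval (an (J - k)%N) (m + k)%N * peval e (m + k)%N *
       \prod_(j < J.+1 | j != k) peval d (m + j)%N =
       D * \sum_(k < J.+1) s (m + k)%N * peval (an (J - k)%N) (m + k)%N.
  rewrite mulr_sumr; apply: eq_bigr => k _.
  have [-> nd] := hk k (ltn_ord k).
  have -> : D = peval d (m + k)%N * \prod_(j < J.+1 | j != k) peval d (m + j)%N by rewrite /D (bigD1 k).
  by field; rewrite nd.
rewrite -ha; by field; rewrite hB.
Qed.

Unset Implicit Arguments.
Theorem theorem3p1 (K : fieldType) (Kchar0 : [pchar K] =i pred0)
  (F : nat -> K) (J : nat) (J_gt0 : (0 < J)%N)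
  (hF : holonomic_of_order F J)
  (a : 'I_J.+1 -> {poly K}) (ha0J : a ord0 * a ord_max != 0)
  (hL : in_ann a F)
  (A B : {poly K})
  (hsum : summable (fun n => peval A n / peval B n * F n))
  (h1 : forall h : nat, coprimep (a ord0) (pshift (a ord_max) h))
  (h2 : forall h : nat, coprimep B (pshift B (J + h)))
  (h3 : forall h : nat, coprimep (a ord0) (pshift B (J + h)))
  (h4 : forall h : nat, coprimep B (pshift (a ord_max) h)) :
  B %| A.
Proof.
have B0 : B != 0.
  apply: contraTneq (h2 0%N) => ->.
  by rewrite /pshift comp_poly0 coprime0p -size_poly_eq1 size_poly0.
case: (eqVneq A 0) => [->|A0]; first exact: dvdp0.
move: ha0J; rewrite mulf_eq0 negb_or => /andP [a00 aJ0].
destruct J as [|J1]; first by [].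
pose an i := a (inord i).
have ea0 : an 0%N = a ord0 by rewrite /an; congr a; apply: val_inj; rewrite /= inordK.
have eaJ : an J1.+1 = a ord_max by rewrite /an; congr a; apply: val_inj; rewrite /= inordK.
have hL' : eventually (fun n => \sum_(i < J1.+2) peval (an i) n * F (n + i)%N = 0).
  apply: ev_mono hL => n h; rewrite -[RHS]h /apply_op; apply: eq_bigr => i _.
  by rewrite /an inord_val.
have aJ0' : an J1.+1 != 0 by rewrite eaJ.
have [s [hs hadj]] := front Kchar0 hF aJ0' hL' A0 B0 hsum.
have [e [d [d0 [ced hI]]]] := adj_ident Kchar0 B0 hs hadj.
apply: (disp_main Kchar0 hI ced d0); rewrite ?ea0 ?eaJ //.
Qed.
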